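(* Let $V=\mathbf R^{p,q}$ be a pseudo-Euclidean vector space with inner product $\langle\cdot,\cdot\rangle$, and let $T$ be a $(3,1)$-tensor on $V$ (a trilinear map $V^3\to V$) having the same symmetries as a $(3,1)$-curvature tensor. Let $V_1,V_2\subset V$ be subspaces such that $V_1\cap V_2$ is non-degenerate and $V=V_1+V_2$. If $T(V_i,V_i,V_i)=0$ for $i=1,2$ and the image of $T$ is contained in $V_1\cap V_2$, then $T=0$.
   Context: ''The same symmetries as a $(3,1)$-curvature tensor'' means: $T(u,v)w=-T(v,u)w$, the first Bianchi identity $T(u,v)w+T(v,w)u+T(w,u)v=0$, and $\langle T(u,v)w,z\rangle=-\langle T(u,v)z,w\rangle$ (hence also pair symmetry $\langle T(u,v)w,z\rangle=\langle T(w,z)u,v\rangle$), writing $T(u,v,w)=T(u,v)w$. *)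

(* Defs.v *)
(* V = R^{p,q} modelled as row vectors 'rV[R]_(p+q). *)
From HB Require Import structures.
From mathcomp Require Import all_boot all_order all_algebra.
Set Implicit Arguments. Unset Strict Implicit. Unset Printing Implicit Defensive.
Import Order.TTheory GRing.Theory Num.Theory.
Local Open Scope ring_scope.

Definition pform (R : realFieldType) (p q : nat) (x y : 'rV[R]_(p + q)) : R :=
  \sum_(i < p + q) (if (i < p)%N then x 0 i * y 0 i else - (x 0 i * y 0 i)).

Definition trilinear (R : realFieldType) (n : nat)
    (T : 'rV[R]_n -> 'rV[R]_n -> 'rV[R]_n -> 'rV[R]_n) : Prop :=
  (forall (a : R) u u' v w, T (a *: u + u') v w = a *: T u v w + T u' v w) /\
  (forall (a : R) u v v' w, T u (a *: v + v') w = a *: T u v w + T u v' w) /\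
  (forall (a : R) u v w w', T u v (a *: w + w') = a *: T u v w + T u v w').

Definition curvature_like (R : realFieldType) (p q : nat)
    (T : 'rV[R]_(p + q) -> 'rV[R]_(p + q) -> 'rV[R]_(p + q) -> 'rV[R]_(p + q)) : Prop :=
  (forall u v w, T u v w = - T v u w) /\
  (forall u v w, T u v w + T v w u + T w u v = 0) /\
  (forall u v w z, pform (T u v w) z = - pform (T u v z) w).

(* A subspace U (row space of a matrix) is non-degenerate for pform. *)
Definition pnondegenerate (R : realFieldType) (p q m : nat) (U : 'M[R]_(m, p + q)) : Prop :=
  forall x : 'rV[R]_(p + q), (x <= U)%MS ->
    (forall y : 'rV[R]_(p + q), (y <= U)%MS -> pform x y = 0) -> x = 0.

(* Main.v *)
Require Import Defs.
From HB Require Import structures.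
From mathcomp Require Import all_boot all_order all_algebra.
From mathcomp Require Import ring lra.
Import Order.TTheory GRing.Theory Num.Theory.
Local Open Scope ring_scope.

Section S.
Variables (R : realFieldType) (p q : nat).
Local Notation V := 'rV[R]_(p + q).

Lemma pformDl (x y z : V) : pform (x + y) z = pform x z + pform y z.
Proof.
rewrite /pform -big_split; apply: eq_bigr => i _; rewrite !mxE.
by case: ifP => _; rewrite mulrDl // opprD.
Qed.

Lemma pform0l (z : V) : pform 0 z = 0.
Proof.
by rewrite /pform big1 // => i _; rewrite !mxE mul0r; case: ifP => _; rewrite ?oppr0.
Qed.

Variable T : V -> V -> V -> V.
Hypothesis Htri : trilinear T.
Hypothesis Hcurv : curvature_like T.

Let Rf a b c d := pform (T a b c) d.

Lemma A12 a b c d : Rf a b c d = - Rf b a c d.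
Proof.
case: Hcurv => H1 _; rewrite /Rf H1 /pform -sumrN; apply: eq_bigr => i _.
by rewrite !mxE mulNr; case: ifP.
Qed.

Lemma A34 a b c d : Rf a b c d = - Rf a b d c.
Proof. by case: Hcurv => _ [_ H]; rewrite /Rf H. Qed.

Lemma B a b c d : Rf a b c d + Rf b c a d + Rf c a b d = 0.
Proof.
case: Hcurv => _ [H _]; rewrite /Rf -!pformDl H; exact: pform0l.
Qed.

Lemma pairsym x y z w : Rf x y z w = Rf z w x y.
Proof.
have := B x y z w; have := B y z w x; have := B z w x y; have := B w x y z.
have := A12 x y z w; have := A12 y z x w; have := A12 z x y w.
have := A12 y z w x; have := A12 z w y x; have := A12 w y z x.
have := A12 z w x y; have := A12 w x z y; have := A12 x z w y.
have := A12 w x y z; have := A12 x y w z; have := A12 y w x z.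
have := A34 x y z w; have := A34 y z x w; have := A34 z x y w.
have := A34 y z w x; have := A34 z w y x; have := A34 w y z x.
have := A34 z w x y; have := A34 w x z y; have := A34 x z w y.
have := A34 w x y z; have := A34 x y w z; have := A34 y w x z.
have := A12 x z y w; have := A34 x z y w; have := A12 y w z x; have := A34 y w z x.
move=> *; lra.
Qed.

Lemma vanish3 (U : 'M[R]_(p + q)) :
  (forall u v w, (u <= U)%MS -> (v <= U)%MS -> (w <= U)%MS -> T u v w = 0) ->
  forall a b c d, (d <= U)%MS ->
  ((a <= U)%MS /\ (b <= U)%MS) \/ ((a <= U)%MS /\ (c <= U)%MS) \/
  ((b <= U)%MS /\ (c <= U)%MS) -> pform (T a b c) d = 0.
Proof.
move=> HU a b c d Hd [[Ha Hb]|[[Ha Hc]|[Hb Hc]]].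
- have := A34 a b c d; rewrite /Rf => ->.
  by rewrite (HU a b d) // pform0l oppr0.
- have := pairsym a b c d; rewrite /Rf => ->.
  by rewrite (HU c d a) // pform0l.
- have := A12 a b c d; rewrite /Rf => ->.
  have := pairsym b a c d; rewrite /Rf => ->.
  by rewrite (HU c d b) // pform0l oppr0.
Qed.

Lemma TD1 a a' b c : T (a + a') b c = T a b c + T a' b c.
Proof. by have := Htri.1 1 a a' b c; rewrite !scale1r. Qed.
Lemma TD2 a b b' c : T a (b + b') c = T a b c + T a b' c.
Proof. by have := Htri.2.1 1 a b b' c; rewrite !scale1r. Qed.
Lemma TD3 a b c c' : T a b (c + c') = T a b c + T a b c'.
Proof. by have := Htri.2.2 1 a b c c'; rewrite !scale1r. Qed.

End S.

Theorem lemma4p4 (R : realFieldType) (p q : nat)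
    (T : 'rV[R]_(p + q) -> 'rV[R]_(p + q) -> 'rV[R]_(p + q) -> 'rV[R]_(p + q))
    (V1 V2 : 'M[R]_(p + q)) :
  trilinear T ->
  curvature_like T ->
  pnondegenerate (V1 :&: V2)%MS ->
  (V1 + V2 == 1%:M)%MS ->
  (forall u v w, (u <= V1)%MS -> (v <= V1)%MS -> (w <= V1)%MS -> T u v w = 0) ->
  (forall u v w, (u <= V2)%MS -> (v <= V2)%MS -> (w <= V2)%MS -> T u v w = 0) ->
  (forall u v w, (T u v w <= V1 :&: V2)%MS) ->
  forall u v w, T u v w = 0.
Proof.
move=> Htri Hcurv Hnd /eqmxP Hsum H1 H2 Him u v w.
have dec : forall x : 'rV[R]_(p + q), exists x1 x2,
    [/\ (x1 <= V1)%MS, (x2 <= V2)%MS & x = x1 + x2].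
  move=> x; have Hx : (x <= V1 + V2)%MS.
    by apply: submx_trans (submx1 x) _; rewrite Hsum.
  case/sub_addsmxP: Hx => [[a b]] /= ->.
  by exists (a *m V1), (b *m V2); split; rewrite ?submxMl.
apply: Hnd => // y Hy.
have Hy1 : (y <= V1)%MS by apply: submx_trans Hy (capmxSl _ _).
have Hy2 : (y <= V2)%MS by apply: submx_trans Hy (capmxSr _ _).
have [u1 [u2 [Hu1 Hu2 ->]]] := dec u.
have [v1 [v2 [Hv1 Hv2 ->]]] := dec v.
have [w1 [w2 [Hw1 Hw2 ->]]] := dec w.
rewrite !(@TD1 R p q T Htri) !(@TD2 R p q T Htri) !(@TD3 R p q T Htri) !pformDl.
have V1z := @vanish3 R p q T Hcurv _ H1. have V2z := @vanish3 R p q T Hcurv _ H2.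
rewrite (V1z u1 v1 w1) ?(V1z u1 v1 w2) ?(V1z u1 v2 w1) ?(V2z u1 v2 w2)
  ?(V1z u2 v1 w1) ?(V2z u2 v1 w2) ?(V2z u2 v2 w1) ?(V2z u2 v2 w2) ?addr0 //; tauto.
Qed.
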